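(* Every RPA-recognizable $\omega$-language is RPBA-recognizable, and there is an RPBA-recognizable $\omega$-language that is not RPA-recognizable.
   Context: A Parikh automaton of dimension $d$ is $\mathcal{A}=(Q,\Sigma,q_0,\Delta,F,C)$ with finite $Q$, $q_0\in Q$, $F\subseteq Q$, finite $\Delta\subseteq Q\times\Sigma\times\mathbb{N}^d\times Q$ and semi-linear $C\subseteq\mathbb{N}^d$ (a finite union of sets $\{b_0+\sum_{j=1}^\ell b_jz_j\mid z_j\in\mathbb{N}\}$, $b_j\in\mathbb{N}^d$). A run on an infinite word $\alpha$ is $r_1r_2\cdots$ with $r_i=(p_{i-1},\alpha_i,\mathbf{v}_i,p_i)\in\Delta$, $p_0=q_0$, and $\rho(r_1\cdots r_i)=\sum_{k\le i}\mathbf{v}_k$. For an RPA (reachability Parikh automaton) the run is accepting if there is $i\ge1$ with $p_i\in F$ and $\rho(r_1\cdots r_i)\in C$. For an RPBA (reachability Parikh–Büchi automaton) the run is accepting if there is $i\ge1$ with $p_i\in F$ and $\rho(r_1\cdots r_i)\in C$, and additionally there are infinitely many $j$ with $p_j\in F$. An $\omega$-language is X-recognizable if it equals the set of infinite words with an accepting run of some automaton of type X. *)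

(* Defs.v *)
From Stdlib Require List.
From mathcomp Require Import all_boot.
Set Implicit Arguments. Unset Strict Implicit. Unset Printing Implicit Defensive.

Definition vec (d : nat) := 'I_d -> nat.

(* A linear set {b0 + sum_j b_j z_j | z_j in N}, given by (b0, [b_1; ...; b_l]). *)
Definition in_linear (d : nat) (L : vec d * seq (vec d)) (v : vec d) : Prop :=
  exists z : nat -> nat,
    forall i : 'I_d,
      v i = L.1 i + \sum_(j < size L.2) z j * (nth (fun _ => 0) L.2 j) i.

Definition in_semilinear (d : nat) (C : seq (vec d * seq (vec d))) (v : vec d) : Prop :=
  exists2 L, List.In L C & in_linear L v.

Record PA (Sigma : Type) := {
  pa_dim : nat;
  pa_Q : finType;
  pa_q0 : pa_Q;
  pa_Delta : seq (pa_Q * Sigma * vec pa_dim * pa_Q);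
  pa_F : {set pa_Q};
  pa_C : seq (vec pa_dim * seq (vec pa_dim))
}.

Definition psum (d : nat) (v : nat -> vec d) (i : nat) : vec d :=
  fun k => \sum_(j < i) v j k.

(* A run on alpha (0-indexed: alpha n is the (n+1)-th letter) given by the
   state sequence p (p 0 = q0) and vector sequence v, where the (n+1)-th
   transition is (p n, alpha n, v n, p (n+1)). *)
Definition is_run (Sigma : Type) (A : PA Sigma) (alpha : nat -> Sigma)
  (p : nat -> pa_Q A) (v : nat -> vec (pa_dim A)) : Prop :=
  p 0 = pa_q0 A /\ forall n, List.In (p n, alpha n, v n, p n.+1) (pa_Delta A).

Definition reach_cond (Sigma : Type) (A : PA Sigma)
  (p : nat -> pa_Q A) (v : nat -> vec (pa_dim A)) : Prop :=
  exists i, 1 <= i /\ p i \in pa_F A /\ in_semilinear (pa_C A) (psum v i).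

Definition RPA_accepts (Sigma : Type) (A : PA Sigma) (alpha : nat -> Sigma) : Prop :=
  exists p v, @is_run Sigma A alpha p v /\ @reach_cond Sigma A p v.

Definition RPBA_accepts (Sigma : Type) (A : PA Sigma) (alpha : nat -> Sigma) : Prop :=
  exists p v, @is_run Sigma A alpha p v /\ @reach_cond Sigma A p v /\
    (forall N, exists j, N <= j /\ p j \in pa_F A).

Definition RPA_recognizable (Sigma : finType) (L : (nat -> Sigma) -> Prop) : Prop :=
  exists A : PA Sigma, forall alpha, L alpha <-> RPA_accepts A alpha.

Definition RPBA_recognizable (Sigma : finType) (L : (nat -> Sigma) -> Prop) : Prop :=
  exists A : PA Sigma, forall alpha, L alpha <-> RPBA_accepts A alpha.

(* Main.v *)
Require Import Defs.
From mathcomp Require Import all_boot.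
From Stdlib Require Import IndefiniteDescription.
Set Implicit Arguments. Unset Strict Implicit. Unset Printing Implicit Defensive.

Definition zv (d : nat) : vec d := fun _ => 0.

Definition lift_tr (Sigma : Type) (A : PA Sigma)
  (x : pa_Q A * Sigma * vec (pa_dim A) * pa_Q A)
  : seq ((pa_Q A * bool)%type * Sigma * vec (pa_dim A) * (pa_Q A * bool)%type) :=
  let '(q, a, w, q') := x in
  if q' \in pa_F A then
    [:: ((q, false), a, w, (q', false)); ((q, true), a, @zv (pa_dim A), (q', true));
        ((q, false), a, w, (q', true))]
  else [:: ((q, false), a, w, (q', false)); ((q, true), a, @zv (pa_dim A), (q', true))].

Definition PA2 (Sigma : Type) (A : PA Sigma) : PA Sigma :=
  {| pa_dim := pa_dim A;
     pa_Q := (pa_Q A * bool)%type;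
     pa_q0 := (pa_q0 A, false);
     pa_Delta := List.flat_map (@lift_tr Sigma A) (pa_Delta A);
     pa_F := [set x : (pa_Q A * bool)%type | x.2 || (x.1 \in pa_F A)];
     pa_C := pa_C A |}.

Lemma step_inv Sigma (A : PA Sigma) x c u y :
  List.In (x, c, u, y) (pa_Delta (PA2 A)) ->
  exists w, List.In (x.1, c, w, y.1) (pa_Delta A) /\ (x.2 = false -> u = w) /\
    (x.2 = true -> u = @zv (pa_dim A) /\ y.2 = true) /\
    (x.2 = false -> y.2 = true -> y.1 \in pa_F A).
Proof.
move=> /List.in_flat_map [[[[q a] w] q'] [Hin Hl]].
rewrite /lift_tr in Hl.
case E: (q' \in pa_F A) in Hl; simpl in Hl.
- case: Hl => [[<- <- <- <-]|[[<- <- <- <-]|[[[<- <- <- <-]]|[]]]];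
  exists w; split => //=.
- case: Hl => [[<- <- <- <-]|[[<- <- <- <-]|[]]];
  exists w; split => //=.
Qed.

From mathcomp Require Import zify.

Lemma psumS d (v : nat -> vec d) i c : psum v i.+1 c = psum v i c + v i c.
Proof. by rewrite /psum big_ord_recr. Qed.

Lemma psum_eq d (v w : nat -> vec d) i :
  (forall n, n < i -> v n = w n) -> forall c, psum v i c = psum w i c.
Proof.
elim: i => [|i IH] H c; first by rewrite /psum !big_ord0.
rewrite !psumS IH; first by rewrite H.
by move=> n Hn; apply: H; lia.
Qed.

Lemma psum_zero d (v : nat -> vec d) k m :
  (forall n, k <= n -> n < k + m -> v n = @zv d) -> forall c, psum v (k + m) c = psum v k c.
Proof.
elim: m => [|m IH] H c; first by rewrite addn0.
rewrite addnS psumS IH; last by move=> n h1 h2; apply: H; lia.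
rewrite (H (k + m)); [by rewrite /zv addn0 | lia | lia].
Qed.

Lemma semi_ext d C (f g : vec d) :
  (forall c, f c = g c) -> in_semilinear C f -> in_semilinear C g.
Proof.
move=> E [L HL [z Hz]]; exists L => //; exists z => c; by rewrite -E.
Qed.

Lemma rpa_rpba Sigma (A : PA Sigma) alpha :
  RPA_accepts A alpha <-> RPBA_accepts (PA2 A) alpha.
Proof.
split.
- move=> [p [v [[p0 Hr] [i [Hi [HF HC]]]]]].
  exists (fun n => (p n, i <= n)), (fun n => if n < i then v n else @zv (pa_dim A)).
  split; [split|split].
  + rewrite /= p0; congr (_, _); apply/negbTE; rewrite -ltnNge; lia.
  + move=> n /=; apply/List.in_flat_map.
    exists (p n, alpha n, v n, p n.+1); split; first exact: Hr.
    rewrite /lift_tr.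
    case: (ltngtP n.+1 i) => H.
    * have h1 : (i <= n) = false by apply/negbTE; rewrite -ltnNge; lia.
      have h2 : (i <= n.+1) = false by apply/negbTE; rewrite -ltnNge; lia.
      have h3 : n < i by lia.
      rewrite ?h1 ?h2 ?h3; case: (p n.+1 \in pa_F A) => /=; by left.
    * have h1 : (i <= n) by lia.
      have h2 : (i <= n.+1) by lia.
      have h3 : (n < i) = false by apply/negbTE; rewrite -leqNgt; lia.
      rewrite ?h1 ?h2 ?h3; case: (p n.+1 \in pa_F A) => /=; by right; left.
    * have h1 : (i <= n) = false by apply/negbTE; rewrite -ltnNge; lia.
      have h2 : (i <= n.+1) by lia.
      have h3 : n < i by lia.
      rewrite ?h1 ?h2 ?h3 H HF /=; by right; right; left.
  + exists i; split => //; split; first by rewrite inE /= leqnn.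
    apply: semi_ext HC => c; apply: psum_eq => n Hn /=; by rewrite Hn.
  + move=> N; exists (maxn N i); split; first exact: leq_maxl.
    by rewrite inE /= leq_maxr.
- move=> [p' [v' [[p0 Hr] [[i [Hi [HF HC]]] _]]]].
  have Hs n := step_inv (Hr n).
  have Hw : forall n, {w | List.In ((p' n).1, alpha n, w, (p' n.+1).1) (pa_Delta A) /\
                          ((p' n).2 = false -> v' n = w)}.
    move=> n; apply: constructive_indefinite_description.
    have [w [h1 [h2 _]]] := Hs n; by exists w.
  pose w := fun n => proj1_sig (Hw n).
  have mono : forall n m, n <= m -> (p' n).2 -> (p' m).2.
    move=> n; elim=> [|m IH] Hnm Hn.
    * by move: Hn; have -> : n = 0 by lia.
    * case: (ltngtP n m.+1) => H; last by rewrite -H.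
      - have [w0 [_ [_ [h _]]]] := Hs m.
        have := IH ltac:(lia) Hn; by move=> /h [].
      - lia.
  have before : forall k n, (p' k).2 = false -> n <= k -> (p' n).2 = false.
    move=> k n Hk Hnk; apply/negbTE/negP => Hn; by rewrite (mono _ _ Hnk Hn) in Hk.
  have wE : forall k n, (p' k).2 = false -> n <= k -> v' n = w n.
    move=> k n Hk Hnk; rewrite /w; case: (Hw n) => /= u [_ ->] //; exact: before Hk Hnk.
  exists (fun n => (p' n).1), w; split.
    split; first by rewrite p0.
    move=> n; exact: (proj1 (proj2_sig (Hw n))).
  case Ei: (p' i).2.
  + have first : forall i, (p' i).2 = true ->
        exists k, 0 < k <= i /\ (p' k).2 = true /\ (p' k.-1).2 = false.
      elim=> [|j IH] Hj; first by rewrite p0 in Hj.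
      case Ej: (p' j).2.
      * have [k [h1 h2]] := IH Ej; exists k; split => //; lia.
      * by exists j.+1; split => //=; rewrite leqnn.
    have [k [hk [Hk Hk1]]] := first i Ei.
    exists k; split; first lia.
    split.
    * have [w0 [_ [_ [_ h]]]] := Hs k.-1.
      have := h Hk1; rewrite prednK; last lia.
      by move=> /(_ Hk).
    * apply: semi_ext HC => c.
      have -> : i = k + (i - k) by lia.
      rewrite psum_zero.
      - apply: psum_eq => n Hn; apply: (wE k.-1) => //; lia.
      - move=> n h1 h2; have [w0 [_ [_ [h _]]]] := Hs n.
        by case: (h (mono k n h1 Hk)).
  + exists i; split => //; split.
    * by move: HF; rewrite inE Ei.
    * apply: semi_ext HC => c; apply: psum_eq => n Hn; apply: (wE i) => //; lia.
Qed.

Definition infa (alpha : nat -> bool) : Prop :=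
  forall N, exists k, N <= k /\ alpha k = true.

Definition B : PA bool :=
  {| pa_dim := 0;
     pa_Q := bool;
     pa_q0 := false;
     pa_Delta := [:: (false, false, @zv 0, false); (false, true, @zv 0, true);
                     (true, false, @zv 0, false); (true, true, @zv 0, true)];
     pa_F := [set true];
     pa_C := [:: (@zv 0, [::])] |}.

Lemma B_inv x c u y : List.In (x, c, u, y) (pa_Delta B) -> y = c.
Proof.
by case=> [[_ <- _ <-]|[[_ <- _ <-]|[[_ <- _ <-]|[[_ <- _ <-]|[]]]]].
Qed.

Lemma B_ok alpha : infa alpha <-> RPBA_accepts B alpha.
Proof.
split.
- move=> H.
  exists (fun n => if n is k.+1 then alpha k else false), (fun _ => @zv 0).
  have Hrun : @is_run bool B alpha (fun n => if n is k.+1 then alpha k else false) (fun _ => @zv 0).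
    split => // n /=.
    case: n => [|n]; case: (alpha 0) => /=; try case: (alpha n) => /=; try case: (alpha n.+1) => /=; tauto.
  have Hinf : forall N, exists j, N <= j /\
      (fun n => if n is k.+1 then alpha k else false) j \in pa_F B.
    move=> N; have [k [h1 h2]] := H N; exists k.+1; split; first lia.
    by rewrite /= inE h2.
  split => //; split => //.
  have [j [h1 h2]] := Hinf 1.
  exists j; split => //; split => //.
  exists (@zv 0, [::]); first by left.
  exists (fun _ => 0); by case.
- move=> [p [v [[p0 Hr] [_ Hinf]]]] N.
  have [j [h1 h2]] := Hinf N.+1.
  exists j.-1; split; first lia.
  have := B_inv (Hr j.-1); rewrite prednK; last lia.
  move: h2; rewrite /= inE => /eqP -> ->. done.
Qed.


Fixpoint gg (s t k : nat) : nat :=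
  match k with
  | 0 => 0
  | k'.+1 => if gg s t k' == t.-1 then s else (gg s t k').+1
  end.

Lemma gg_inv s t k : s < t ->
  gg s t k < t /\ (k < t -> gg s t k = k) /\ (t <= k -> s <= gg s t k).
Proof.
move=> Hst; elim: k => [|k [h1 [h2 h3]]] /=; first by split; [lia | split => //; lia].
case: eqP => E.
- split => //; split => //.
  move=> Hk; have := h2 ltac:(lia); lia.
- split; first lia. split.
  + move=> Hk; rewrite h2 //; lia.
  + move=> Hk; case: (ltngtP k.+1 t) => H; first lia.
    * have := h3 ltac:(lia); lia.
    * have := h2 ltac:(lia); lia.
Qed.

Lemma pump Sigma (A : PA Sigma) x p v i s t :
  @is_run Sigma A x p v -> 1 <= i -> p i \in pa_F A ->
  in_semilinear (pa_C A) (psum v i) -> i <= s -> s < t -> p s = p t ->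
  RPA_accepts A (fun k => x (gg s t k)).
Proof.
move=> [p0 Hr] Hi HF HC Hs Hst Hp.
exists (fun k => p (gg s t k)), (fun k => v (gg s t k)).
have step : forall k, p (gg s t k.+1) = p (gg s t k).+1.
  move=> k /=; case: eqP => [E|_] //; rewrite E prednK ?Hp //; lia.
split; first split.
- by rewrite /= p0.
- move=> k /=; rewrite step; exact: Hr.
- have gi : gg s t i = i by case: (gg_inv i Hst) => _ [h _]; apply: h; lia.
  exists i; split => //; split; first by rewrite /= gi.
  apply: semi_ext HC => c; apply: psum_eq => n Hn.
  have gn : gg s t n = n by case: (gg_inv n Hst) => _ [h _]; apply: h; lia.
  by rewrite gn.
Qed.

Lemma notRPA : ~ RPA_recognizable infa.
Proof.
move=> [A HA].
pose n := #|pa_Q A|.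
pose x := fun k => (k %% n.+1 == n).
have Hx : infa x.
  move=> N; exists (N * n.+1 + n); split; first nia.
  by rewrite /x /= modnMDl modn_small // eqxx.
have [p [v [[p0 Hr] [i [Hi [HF HC]]]]]] := (proj1 (HA x)) Hx.
pose b := i * n.+1.
pose f := fun j : 'I_n.+1 => p (b + j).
have key : forall a c : 'I_n.+1, a < c -> f a = f c -> False.
  move=> a c Hac Hf.
  have Hst : b + a < b + c by lia.
  have Hib : i <= b + a.
    have h : i <= i * n.+1 by rewrite leq_pmulr.
    rewrite /b; lia.
  have Hacc := pump (conj p0 Hr) Hi HF HC Hib Hst Hf.
  have [k [hk1 hk2]] := (proj2 (HA _)) Hacc (b + c).
  have [g1 [_ g3]] := gg_inv k Hst.
  have g4 := g3 hk1.
  move: hk2; rewrite /x.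
  have -> : gg (b + a) (b + c) k = b + (gg (b + a) (b + c) k - b) by lia.
  have hlt : gg (b + a) (b + c) k - b < n by have := ltn_ord c; lia.
  rewrite /b modnMDl modn_small; last exact: (ltn_trans hlt).
  move=> /eqP E; move: hlt; rewrite /b E ltnn //.
have : ~~ injectiveb f.
  apply/negP => /injectiveP Hinj; move: (@leq_card _ _ f Hinj); by rewrite card_ord /n ltnn.
move=> /injectivePn [j1 [j2 Hne Heq]].
case: (ltngtP j1 j2) => H.
- exact: key H Heq.
- exact: key H (esym Heq).
- by move: Hne; rewrite (val_inj H) eqxx.
Qed.

Theorem lemma2 :
  (forall (Sigma : finType) (L : (nat -> Sigma) -> Prop),
      RPA_recognizable L -> RPBA_recognizable L) /\
  (exists (Sigma : finType) (L : (nat -> Sigma) -> Prop),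
      RPBA_recognizable L /\ ~ RPA_recognizable L).
Proof.
split.
- move=> Sigma L [A HA]; exists (PA2 A) => alpha; rewrite HA; exact: rpa_rpba.
- exists bool, infa; split; last exact: notRPA.
  exists B; exact: B_ok.
Qed.
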